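(* Let $V$ be a $2n$-dimensional real vector space and let $\omega,\Omega$ be two symplectic (nondegenerate alternating bilinear) forms on $V$. If the set of Lagrangian subspaces of $V$ with respect to $\omega$ coincides with the set of Lagrangian subspaces with respect to $\Omega$, then there is a constant $c\neq0$ with $\Omega=c\,\omega$.
   Context: A Lagrangian subspace of a $2n$-dimensional symplectic vector space $(V,\omega)$ is an $n$-dimensional subspace on which $\omega$ vanishes identically. *)

(* Defs.v *)
From HB Require Import structures.
From mathcomp Require Import all_boot all_order all_algebra.
From mathcomp Require Import reals.
Set Implicit Arguments. Unset Strict Implicit. Unset Printing Implicit Defensive.
Import Order.TTheory GRing.Theory Num.Theory.
Local Open Scope ring_scope.

Definition bilinear_form (R : pzRingType) (V : lmodType R) (w : V -> V -> R) :=
  (forall (a : R) (u v x : V), w (a *: u + v) x = a * w u x + w v x) /\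
  (forall (a : R) (x u v : V), w x (a *: u + v) = a * w x u + w x v).

Definition alternating_form (R : pzRingType) (V : lmodType R) (w : V -> V -> R) :=
  forall v : V, w v v = 0.

Definition nondegenerate_form (R : pzRingType) (V : lmodType R) (w : V -> V -> R) :=
  forall u : V, (forall v : V, w u v = 0) -> u = 0.

Definition symplectic_form (R : pzRingType) (V : lmodType R) (w : V -> V -> R) :=
  [/\ bilinear_form w, alternating_form w & nondegenerate_form w].

(* Lagrangian subspace of a 2n-dimensional symplectic space: an n-dimensional
   subspace on which w vanishes identically. *)
Definition lagrangian (F : fieldType) (V : vectType F) (n : nat)
    (w : V -> V -> F) (U : {vspace V}) :=
  \dim U = n /\ (forall u v, u \in U -> v \in U -> w u v = 0).

(* Main.v *)
Require Import Defs.
From HB Require Import structures.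
From mathcomp Require Import all_boot all_order all_algebra.
From mathcomp Require Import reals.
From mathcomp Require Import zify ring.
From Stdlib Require Import Classical.
Import Order.TTheory GRing.Theory Num.Theory.
Local Open Scope ring_scope.
Set Implicit Arguments. Unset Strict Implicit. Unset Printing Implicit Defensive.
Import VectorInternalTheory.
Definition iso (F : fieldType) (m : nat) (G : 'M[F]_m) p (A : 'M[F]_(p, m)) :=
  A *m G *m A^T = 0.

Lemma iso_sub (F : fieldType) (m : nat) (G : 'M[F]_m) p q (A : 'M_(p, m)) (B : 'M_(q, m)) :
  (A <= B)%MS -> iso G B -> iso G A.
Proof.
move=> /submxP[D ->]; rewrite /iso trmx_mul => hB.
have -> : D *m B *m G *m (B^T *m D^T) = D *m (B *m G *m B^T) *m D^T by rewrite !mulmxA.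
by rewrite hB mulmx0 mul0mx.
Qed.

Lemma orth_sym (F : fieldType) (m : nat) (G : 'M[F]_m) (hG : G^T = - G) p q
  (A : 'M_(p, m)) (B : 'M_(q, m)) :
  A *m G *m B^T = 0 -> B *m G *m A^T = 0.
Proof.
move=> h; have := congr1 trmx h; rewrite !trmx_mul trmxK hG trmx0 mulNmx mulmxN mulmxA.
by move/eqP; rewrite oppr_eq0 => /eqP.
Qed.

Lemma iso_col (F : fieldType) (m : nat) (G : 'M[F]_m) (hG : G^T = - G) p q
  (A : 'M_(p, m)) (B : 'M_(q, m)) :
  iso G A -> iso G B -> B *m G *m A^T = 0 -> iso G (col_mx A B).
Proof.
move=> hA hB h; rewrite /iso tr_col_mx mul_col_mx mul_col_row.
by rewrite hA hB h (orth_sym hG h) block_mx0.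
Qed.

Lemma iso_half (F : fieldType) (m : nat) (G : 'M[F]_m) (hU : G \in unitmx)
  (L : 'M_m) : iso G L -> (\rank L <= m - \rank L)%N.
Proof.
move=> hL.
have sLP : (L <= kermx (G *m L^T))%MS by apply/sub_kermxP; rewrite mulmxA.
have rP : \rank (kermx (G *m L^T)) = (m - \rank L)%N.
  rewrite mxrank_ker -mxrank_tr trmx_mul trmxK mxrankMfree ?mxrank_tr //.
  by rewrite row_free_unit unitmx_tr.
by rewrite -rP mxrankS.
Qed.

Lemma iso_step (F : fieldType) (m : nat) (G : 'M[F]_m) (hG : G^T = - G)
  (hd : forall x : 'rV_m, x *m G *m x^T = 0) (hU : G \in unitmx)
  (L : 'M_m) : iso G L -> (\rank L < m - \rank L)%N ->
  exists L' : 'M_m, [/\ (L <= L')%MS, iso G L' & (\rank L < \rank L')%N].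
Proof.
move=> hL hlt.
set P := kermx (G *m L^T).
have rP : \rank P = (m - \rank L)%N.
  rewrite mxrank_ker -mxrank_tr trmx_mul trmxK mxrankMfree ?mxrank_tr //.
  by rewrite row_free_unit unitmx_tr.
have : ~~ (P <= L)%MS.
  apply/negP => /mxrankS; rewrite rP; lia.
case/row_subPn => i hi; set x := row i P.
have xP : (x <= P)%MS by apply: row_sub.
have hx : x *m G *m L^T = 0 by rewrite -mulmxA; apply/sub_kermxP.
exists (L + x)%MS; split.
- exact: addsmxSl.
- apply: (iso_sub (B := col_mx L x)); first by rewrite addsmxE.
  exact: iso_col.
- apply: rank_ltmx; rewrite ltmxE addsmxSl /=; apply/negP => h.
  by move: hi; rewrite (submx_trans (addsmxSr L x) h).
Qed.

Lemma iso_ext (F : fieldType) (m : nat) (G : 'M[F]_m) (hG : G^T = - G)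
  (hd : forall x : 'rV_m, x *m G *m x^T = 0) (hU : G \in unitmx) k :
  forall L : 'M_m, iso G L -> (m - \rank L <= k)%N ->
  exists L' : 'M_m, [/\ (L <= L')%MS, iso G L' & (2 * \rank L')%N = m].
Proof.
elim: k => [|k IH] L hL hk.
  have := iso_half hU hL; have := rank_leq_col L => h1 h2.
  exists L; split => //; lia.
have h2 := iso_half hU hL; have h1 := rank_leq_col L.
case: (ltnP (\rank L) (m - \rank L)) => hlt; last first.
  by exists L; split => //; lia.
have [L' [s1 s2 s3]] := iso_step hG hd hU hL hlt.
have [L'' [t1 t2 t3]] := IH L' s2 ltac:(lia).
exists L''; split => //; exact: submx_trans t1.
Qed.

Lemma exists_lag (F : fieldType) (m : nat) (G : 'M[F]_m) (hG : G^T = - G)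
  (hd : forall x : 'rV_m, x *m G *m x^T = 0) (hU : G \in unitmx) (a b : 'rV_m) :
  a *m G *m b^T = 0 ->
  exists L : 'M_m, [/\ (a <= L)%MS, (b <= L)%MS, iso G L & (2 * \rank L)%N = m].
Proof.
move=> hab.
have h0 : iso G (a + b)%MS.
  apply: (iso_sub (B := col_mx a b)); first by rewrite addsmxE.
  apply: iso_col => //; rewrite ?/iso ?hd //; exact: orth_sym.
have [L [s1 s2 s3]] := iso_ext hG hd hU h0 (leqnn _).
exists L; split => //; apply: submx_trans s1; [exact: addsmxSl | exact: addsmxSr].
Qed.
Lemma memvK' (K : fieldType) (V : vectType K) (v : V) (U : {vspace V}) :
  (v \in U) = (v2r v <= vs2mx U)%MS.
Proof. by rewrite -genmxE. Qed.


Lemma wDl (R : fieldType) (V : vectType R) (w : V -> V -> R) :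
  bilinear_form w -> forall u v x, w (u + v) x = w u x + w v x.
Proof. by move=> [h1 h2] u v x; rewrite -[u]scale1r h1 mul1r scale1r. Qed.
Lemma wDr (R : fieldType) (V : vectType R) (w : V -> V -> R) :
  bilinear_form w -> forall x u v, w x (u + v) = w x u + w x v.
Proof. by move=> [h1 h2] x u v; rewrite -[u]scale1r h2 mul1r scale1r. Qed.
Lemma w0l (R : fieldType) (V : vectType R) (w : V -> V -> R) :
  bilinear_form w -> forall x, w 0 x = 0.
Proof.
move=> [h1 h2] x; have := h1 (-1) 0 0 x.
by rewrite scaler0 addr0 mulN1r addNr.
Qed.
Lemma wZl (R : fieldType) (V : vectType R) (w : V -> V -> R) :
  bilinear_form w -> forall a u x, w (a *: u) x = a * w u x.
Proof. by move=> hb a u x; have := hb.1 a u 0 x; rewrite addr0 w0l // addr0. Qed.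
Lemma w0r (R : fieldType) (V : vectType R) (w : V -> V -> R) :
  bilinear_form w -> forall x, w x 0 = 0.
Proof.
move=> [h1 h2] x; have := h2 (-1) x 0 0.
by rewrite scaler0 addr0 mulN1r addNr.
Qed.
Lemma wZr (R : fieldType) (V : vectType R) (w : V -> V -> R) :
  bilinear_form w -> forall a x u, w x (a *: u) = a * w x u.
Proof. by move=> hb a x u; have := hb.2 a x u 0; rewrite addr0 w0r // addr0. Qed.

Lemma w_antisym (R : fieldType) (V : vectType R) (w : V -> V -> R) :
  bilinear_form w -> alternating_form w -> forall x y, w x y = - w y x.
Proof.
move=> hb ha x y; have := ha (x + y).
rewrite !(wDl hb, wDr hb) !ha add0r addr0 => /eqP.
by rewrite addr_eq0 => /eqP.
Qed.

Lemma w_suml (R : fieldType) (V : vectType R) (w : V -> V -> R) (hb : bilinear_form w)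
  k (a : 'I_k -> R) (f : 'I_k -> V) y :
  w (\sum_i a i *: f i) y = \sum_i a i * w (f i) y.
Proof.
elim/big_rec2: _ => [|i s1 s2 _ <-]; first exact: w0l.
by rewrite wDl // wZl.
Qed.
Lemma w_sumr (R : fieldType) (V : vectType R) (w : V -> V -> R) (hb : bilinear_form w)
  k (a : 'I_k -> R) (f : 'I_k -> V) y :
  w y (\sum_i a i *: f i) = \sum_i a i * w y (f i).
Proof.
elim/big_rec2: _ => [|i s1 s2 _ <-]; first exact: w0r.
by rewrite wDr // wZr.
Qed.

Definition ebas (R : fieldType) (V : vectType R) (i : 'I_(dim V)) : V :=
  r2v (delta_mx 0 i).
Definition Gm (R : fieldType) (V : vectType R) (w : V -> V -> R) : 'M[R]_(dim V) :=
  \matrix_(i, j) w (@ebas R V i) (@ebas R V j).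

Lemma vexp (R : fieldType) (V : vectType R) (x : V) :
  x = \sum_i (v2r x) 0 i *: @ebas R V i.
Proof.
rewrite -{1}[x]v2rK {1}(row_sum_delta (v2r x)) linear_sum.
by apply: eq_bigr => i _; rewrite linearZ.
Qed.

Lemma wE (R : fieldType) (V : vectType R) (w : V -> V -> R) (hb : bilinear_form w) x y :
  w x y = (v2r x *m Gm w *m (v2r y)^T) 0 0.
Proof.
rewrite {1}(vexp x) {1}(vexp y) w_suml // mxE.
under eq_bigr do rewrite w_sumr // big_distrr.
rewrite exchange_big /=; apply: eq_bigr => j _.
rewrite !mxE big_distrl /=; apply: eq_bigr => i _.
by rewrite !mxE; ring.
Qed.
Lemma Gm_tr (R : fieldType) (V : vectType R) (w : V -> V -> R) :
  symplectic_form w -> (Gm w)^T = - Gm w.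
Proof.
case=> hb ha _; apply/matrixP => i j; rewrite !mxE.
exact: w_antisym.
Qed.

Lemma Gm_diag (R : fieldType) (V : vectType R) (w : V -> V -> R) :
  symplectic_form w -> forall x : 'rV_(dim V), x *m Gm w *m x^T = 0.
Proof.
case=> hb ha _ x; apply/matrixP => i j; rewrite [i]ord1 [j]ord1 [RHS]mxE.
by rewrite -(ha (r2v x)) wE // r2vK.
Qed.

Lemma Gm_unit (R : fieldType) (V : vectType R) (w : V -> V -> R) :
  symplectic_form w -> Gm w \in unitmx.
Proof.
case=> hb ha hn; rewrite -row_free_unit -kermx_eq0; apply/eqP/row_matrixP => i.
rewrite row0; set u := row i _.
have hu : u *m Gm w = 0 by rewrite /u -row_mul mulmx_ker row0.
have : r2v u = 0.
  apply: hn => y; rewrite wE // r2vK hu !mul0mx mxE //.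
by move/(congr1 v2r); rewrite r2vK linear0.
Qed.

Lemma claimA (R : fieldType) (V : vectType R) (n : nat)
    (hdim : \dim (fullv : {vspace V}) = (2 * n)%N)
    (w W : V -> V -> R) (hw : symplectic_form w)
    (hlag : forall U : {vspace V}, lagrangian n w U -> lagrangian n W U) :
  forall u v, w u v = 0 -> W u v = 0.
Proof.
move=> u v huv.
have hb := hw; case: hb => hb _ _.
have h0 : v2r u *m Gm w *m (v2r v)^T = 0.
  by rewrite [LHS]mx11_scalar -wE // huv raddf0.
have [L [s1 s2 hL hr]] := exists_lag (Gm_tr hw) (Gm_diag hw) (Gm_unit hw) h0.
have memL : forall x : V, (x \in mx2vs L) = (v2r x <= L)%MS.
  by move=> x; rewrite memvK' mx2vsK.
have [_ hW] : lagrangian n W (mx2vs L).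
  apply: hlag; split.
    rewrite /dimv mx2vsK; move: hdim; rewrite dimvf; lia.
  move=> x y; rewrite !memL => /submxP[c hc] /submxP[d hd].
  rewrite wE // hc hd trmx_mul.
  have -> : c *m L *m Gm w *m (L^T *m d^T) = c *m (L *m Gm w *m L^T) *m d^T
    by rewrite !mulmxA.
  by rewrite hL mulmx0 mul0mx mxE.
by apply: hW; rewrite memL.
Qed.
Lemma claimB (R : fieldType) (V : vectType R) (w W : V -> V -> R)
  (hb : bilinear_form w) (hB : bilinear_form W)
  (hA : forall u v, w u v = 0 -> W u v = 0) u x v :
  w u x != 0 -> W u v = W u x / w u x * w u v.
Proof.
move=> hx; set t := w u v / w u x.
have h1 : w u ((- t) *: x + v) = 0.
  by rewrite hb.2 /t; field.
have := hA _ _ h1; rewrite hB.2 /t => h2.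
have -> : W u v = - t * W u x + W u v - (- t * W u x) by ring.
rewrite h2 /t; field; exact: hx.
Qed.

Lemma exists_nz (R : fieldType) (V : vectType R) (w : V -> V -> R)
  (hn : nondegenerate_form w) u : u != 0 -> exists x, w u x != 0.
Proof.
move=> hu; apply: NNPP => hne; apply: (negP hu); apply/eqP; apply: hn => v.
by apply/eqP; apply: NNPP => hv; apply: hne; exists v; apply/negP.
Qed.

Lemma exists_both (R : fieldType) (V : vectType R) (w : V -> V -> R)
  (hb : bilinear_form w) (hn : nondegenerate_form w) a b :
  a != 0 -> b != 0 -> exists z, w a z != 0 /\ w b z != 0.
Proof.
move=> ha hb'; have [x1 h1] := exists_nz hn ha; have [x2 h2] := exists_nz hn hb'.
have [e1|n1] := eqVneq (w b x1) 0; last by exists x1.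
have [e2|n2] := eqVneq (w a x2) 0; last by exists x2.
by exists (x1 + x2); rewrite !(wDr hb) e1 e2 addr0 add0r.
Qed.

Theorem mainTheorem5 (R : realType) (V : vectType R) (n : nat)
    (hdim : \dim (fullv : {vspace V}) = (2 * n)%N)
    (w W : V -> V -> R) (hw : symplectic_form w) (hW : symplectic_form W)
    (hlag : forall U : {vspace V}, lagrangian n w U <-> lagrangian n W U) :
  exists c : R, c != 0 /\ forall u v : V, W u v = c * w u v.
Proof.
have hA : forall u v, w u v = 0 -> W u v = 0.
  by apply: (claimA hdim hw) => U /hlag.
have hA' : forall u v, W u v = 0 -> w u v = 0.
  by apply: (claimA hdim hW) => U /hlag.
case: (hw) => hb ha hn; case: (hW) => hB hAl hN.
have [h0|hnz] := eqVneq (fullv : {vspace V}) 0%VS.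
  exists 1; split; first exact: oner_neq0.
  move=> u v; have : u \in (fullv : {vspace V}) by apply: memvf.
  by rewrite h0 memv0 => /eqP ->; rewrite (w0l hb) (w0l hB) mulr0.
set k := fun u x => W u x / w u x.
have kD : forall u x y, w u x != 0 -> w u y != 0 -> k u x = k u y.
  move=> u x y hx hy; rewrite /k (claimB hb hB hA y hx); by field; rewrite ?hx ?hy.
have kS : forall u x, k u x = k x u.
  move=> u x; rewrite /k (w_antisym hb ha x u) (w_antisym hB hAl x u).
  by rewrite invrN mulrNN.
have nzS : forall u x, w u x != 0 -> w x u != 0.
  by move=> u x; rewrite (w_antisym hb ha x u) oppr_eq0.
set u0 := vpick (fullv : {vspace V}).
have hu0 : u0 != 0 by rewrite vpick0.
have [x0 hx0] := exists_nz hn hu0.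
have hWx0 : W u0 x0 != 0 by apply/eqP => /hA'; apply/eqP.
exists (k u0 x0); split.
  by rewrite /k mulf_neq0 // invr_eq0.
move=> u v; have [e|ne] := eqVneq (w u v) 0.
  by rewrite e mulr0; apply: hA.
have hu : u != 0 by apply: contraNneq ne => ->; rewrite (w0l hb).
have [z [hz1 hz2]] := exists_both hb hn hu0 hu.
rewrite (claimB hb hB hA v ne) -/(k u v).
congr (_ * _).
rewrite (kD _ _ _ ne hz2) kS (kD _ _ _ (nzS _ _ hz2) (nzS _ _ hz1)) -kS.
exact: kD.
Qed.
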